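(* In the standing setting, let $(\psi,\alpha)\in\mathcal{A}\times\mathcal{B}$ with lifting $\psi^\uparrow$. Then $(G,r)$, $(G,r')$, $(G,\widetilde r)$, $(G,\widetilde r')$ are set-theoretic non-degenerate solutions of the Yang--Baxter equation, where for $g,h\in G$: $$r(g,h)=\Big(\psi^\uparrow(g)\,h\,\psi^\uparrow(g)^{-1}\,\alpha(g,h),\ \psi^\uparrow(h)^{-1}\psi^\uparrow(g)\,h^{-1}\,\psi^\uparrow(g)^{-1}\,g\,\psi^\uparrow(g)\,h\,\psi^\uparrow(g)^{-1}\psi^\uparrow(h)\,\alpha(h^{-1},g)\Big);$$ $$r'(g,h)=\Big(g\,\psi^\uparrow(g)\,h\,\psi^\uparrow(g)^{-1}\,g^{-1}\,\alpha(g,h),\ \psi^\uparrow(h)^{-1}\,g\,\psi^\uparrow(h)\,\alpha(h^{-1},g)\Big);$$ $$\widetilde r(g,h)=\Big(\psi^\uparrow(g)^{-1}\,h\,\psi^\uparrow(g)\,\alpha(g^{-1},h),\ \psi^\uparrow(g)^{-1}\,h^{-1}\,\psi^\uparrow(g)\,g\,h\,\alpha(g,h)\Big);$$ $$\widetilde r'(g,h)=\Big(g\,h\,\psi^\uparrow(h)\,g^{-1}\,\psi^\uparrow(h)^{-1}\,\alpha(h,g^{-1}),\ \psi^\uparrow(h)\,g\,\psi^\uparrow(h)^{-1}\,\alpha(h,g)\Big).$$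
   Context: Standing setting: $(G,\cdot)$ is a group, $K$ is a subgroup of $G$ contained in the centre $Z(G)$, and $A$ is a subgroup with $K\le A\le G$ and $A/K$ abelian. Let $\mathcal{A}=\{\psi\in\operatorname{End}(G/K):\psi(G/K)\le A/K\}$. A lifting of $\psi\in\mathcal{A}$ is any set map $\psi^{\uparrow}:G\to A$ with $\psi^{\uparrow}(g)K=\psi(gK)$ for all $g\in G$. Let $\mathcal{B}$ be the set of maps $\alpha:G\times G\to K$ that are bilinear, i.e. $\alpha(gh,k)=\alpha(g,k)\alpha(h,k)$ and $\alpha(g,hk)=\alpha(g,h)\alpha(g,k)$, and satisfy $\alpha(k,g)=\alpha(g,k)=1$ for all $k\in K$, $g\in G$. A set-theoretic solution of the Yang--Baxter equation is a pair $(X,r)$ with $X\neq\emptyset$ and $r:X\times X\to X\times X$, $r(x,y)=(\sigma_x(y),\tau_y(x))$, a bijection satisfying $(r\times\mathrm{id}_X)(\mathrm{id}_X\times r)(r\times\mathrm{id}_X)=(\mathrm{id}_X\times r)(r\times\mathrm{id}_X)(\mathrm{id}_X\times r)$; it is non-degenerate if all $\sigma_x$ and $\tau_x$ are bijective. *)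

(* Defs.v *)
Set Implicit Arguments.

Section Defs.
Variable T : Type.
Variable mul : T -> T -> T.
Variable inv : T -> T.
Variable one : T.

Definition is_group : Prop :=
  (forall x y z, mul x (mul y z) = mul (mul x y) z) /\
  (forall x, mul one x = x) /\ (forall x, mul x one = x) /\
  (forall x, mul (inv x) x = one) /\ (forall x, mul x (inv x) = one).

Definition is_subgroup (H : T -> Prop) : Prop :=
  H one /\ (forall x y, H x -> H y -> H (mul x y)) /\ (forall x, H x -> H (inv x)).

Definition central (K : T -> Prop) : Prop := forall k g, K k -> mul k g = mul g k.

Definition same_coset (K : T -> Prop) (x y : T) : Prop := K (mul (inv x) y).

Definition quotient_abelian (K A : T -> Prop) : Prop :=
  forall a b, A a -> A b -> same_coset K (mul a b) (mul b a).

(* psi_up : G -> A is a lifting of some psi in End(G/K) with psi(G/K) <= A/K,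
   i.e. g |-> psi_up(g) K is a well-defined endomorphism of G/K. *)
Definition is_lifting_A (K A : T -> Prop) (psi_up : T -> T) : Prop :=
  (forall g, A (psi_up g)) /\
  (forall g h, same_coset K g h -> same_coset K (psi_up g) (psi_up h)) /\
  (forall g h, same_coset K (psi_up (mul g h)) (mul (psi_up g) (psi_up h))).

Definition is_in_B (K : T -> Prop) (alpha : T -> T -> T) : Prop :=
  (forall g h, K (alpha g h)) /\
  (forall g h k, alpha (mul g h) k = mul (alpha g k) (alpha h k)) /\
  (forall g h k, alpha g (mul h k) = mul (alpha g h) (alpha g k)) /\
  (forall k g, K k -> alpha k g = one /\ alpha g k = one).

Variable psi : T -> T.
Variable alpha : T -> T -> T.

Local Notation "x * y" := (mul x y).
Local Notation "x ^-1" := (inv x) (at level 3).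

Definition r_map (p : T * T) : T * T :=
  let (g, h) := p in
  (psi g * h * (psi g)^-1 * alpha g h,
   (psi h)^-1 * psi g * h^-1 * (psi g)^-1 * g * psi g * h * (psi g)^-1 * psi h
     * alpha (h^-1) g).

Definition r'_map (p : T * T) : T * T :=
  let (g, h) := p in
  (g * psi g * h * (psi g)^-1 * g^-1 * alpha g h,
   (psi h)^-1 * g * psi h * alpha (h^-1) g).

Definition rt_map (p : T * T) : T * T :=
  let (g, h) := p in
  ((psi g)^-1 * h * psi g * alpha (g^-1) h,
   (psi g)^-1 * h^-1 * psi g * g * h * alpha g h).

Definition rt'_map (p : T * T) : T * T :=
  let (g, h) := p in
  (g * h * psi h * g^-1 * (psi h)^-1 * alpha h (g^-1),
   psi h * g * (psi h)^-1 * alpha h g).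

End Defs.

Definition bij {X Y : Type} (f : X -> Y) : Prop :=
  exists g : Y -> X, (forall x, g (f x) = x) /\ (forall y, f (g y) = y).

Definition r12 {X : Type} (r : X * X -> X * X) (t : X * X * X) : X * X * X :=
  let '(x, y, z) := t in let (a, b) := r (x, y) in (a, b, z).
Definition r23 {X : Type} (r : X * X -> X * X) (t : X * X * X) : X * X * X :=
  let '(x, y, z) := t in let (b, c) := r (y, z) in (x, b, c).

Definition is_YBE_solution {X : Type} (r : X * X -> X * X) : Prop :=
  inhabited X /\ bij r /\
  (forall t, r12 r (r23 r (r12 r t)) = r23 r (r12 r (r23 r t))).

Definition non_degenerate {X : Type} (r : X * X -> X * X) : Prop :=
  forall x, bij (fun y => fst (r (x, y))) /\ bij (fun y => snd (r (y, x))).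

Definition is_nd_YBE_solution {X : Type} (r : X * X -> X * X) : Prop :=
  is_YBE_solution r /\ non_degenerate r.

(* Main.v *)
Require Import Defs.
From Stdlib Require Import Setoid FunctionalExtensionality.
Set Implicit Arguments.
Section Gen.
Variable X : Type.
Variables r s : X * X -> X * X.
Hypothesis rs : forall p, r (s p) = p.
Hypothesis sr : forall p, s (r p) = p.

Lemma r12_inv (f g : X * X -> X * X) : (forall p, f (g p) = p) -> forall t, r12 f (r12 g t) = t.
Proof. intros H [[x y] z]. simpl. destruct (g (x,y)) eqn:E. simpl.
  rewrite <- E, H. reflexivity. Qed.
Lemma r23_inv (f g : X * X -> X * X) : (forall p, f (g p) = p) -> forall t, r23 f (r23 g t) = t.
Proof. intros H [[x y] z]. simpl. destruct (g (y,z)) eqn:E. simpl.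
  rewrite <- E, H. reflexivity. Qed.

Lemma braid_inv : (forall t, r12 r (r23 r (r12 r t)) = r23 r (r12 r (r23 r t))) ->
  forall t, r12 s (r23 s (r12 s t)) = r23 s (r12 s (r23 s t)).
Proof. intros Hb t.
  set (u := r23 s (r12 s (r23 s t))).
  assert (E : r23 r (r12 r (r23 r u)) = t)
    by (unfold u; rewrite (r23_inv r s rs), (r12_inv r s rs), (r23_inv r s rs); reflexivity).
  rewrite <- E. rewrite <- Hb.
  rewrite (r12_inv s r sr), (r23_inv s r sr), (r12_inv s r sr). reflexivity. Qed.

Lemma ybe_pair : inhabited X -> (forall t, r12 r (r23 r (r12 r t)) = r23 r (r12 r (r23 r t))) ->
  is_YBE_solution r /\ is_YBE_solution s.
Proof. intros Hi Hb. split; split; auto; split.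
  - exists s; split; auto.
  - exact Hb.
  - exists r; split; auto.
  - apply braid_inv; exact Hb. Qed.
End Gen.

Section Abs.
Variable T : Type.
Variable mul : T -> T -> T.
Variable inv : T -> T.
Variable one : T.
Local Notation "x * y" := (mul x y).
Hypothesis assoc : forall x y z, x * (y * z) = (x * y) * z.
Hypothesis m1l : forall x, one * x = x.
Hypothesis m1r : forall x, x * one = x.
Hypothesis mVl : forall x, inv x * x = one.
Hypothesis mVr : forall x, x * inv x = one.
Variable lam : T -> T -> T.
Hypothesis lamD : forall x y z, lam x (y * z) = lam x y * lam x z.
Hypothesis lamM : forall x y z, lam (x * y) z = lam x (lam y z).
Hypothesis lamC : forall x y z, lam x (lam y z) = lam y (lam x z).
Hypothesis lamL : forall x y z, lam (lam x y) z = lam y z.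
Hypothesis lam1 : forall z, lam one z = z.

Lemma assocR x y z : (x * y) * z = x * (y * z). Proof. now rewrite assoc. Qed.
Lemma cancL x y : x * (inv x * y) = y. Proof. now rewrite assoc, mVr, m1l. Qed.
Lemma cancL' x y : inv x * (x * y) = y. Proof. now rewrite assoc, mVl, m1l. Qed.
Lemma inv_uniq x y : x * y = one -> inv x = y.
Proof. intro H. rewrite <- (m1r (inv x)), <- H, assoc, mVl, m1l. reflexivity. Qed.
Lemma invM x y : inv (x * y) = inv y * inv x.
Proof. apply inv_uniq. rewrite assocR, (assoc y), mVr, m1l, mVr. reflexivity. Qed.
Lemma invI x : inv (inv x) = x. Proof. apply inv_uniq. apply mVl. Qed.
Lemma inv1 : inv one = one. Proof. apply inv_uniq. apply m1l. Qed.
Lemma lam_one x : lam x one = one.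
Proof. assert (H: lam x one = lam x one * lam x one) by (rewrite <- lamD, m1l; reflexivity).
  transitivity (inv (lam x one) * (lam x one * lam x one)). symmetry; apply cancL'.
  rewrite <- H; apply mVl. Qed.
Lemma lamI x y : lam x (inv y) = inv (lam x y).
Proof. symmetry. apply inv_uniq. rewrite <- lamD, mVr. apply lam_one. Qed.
Lemma lamVl x z : lam (inv x) (lam x z) = z. Proof. now rewrite <- lamM, mVl, lam1. Qed.
Lemma lamVr x z : lam x (lam (inv x) z) = z. Proof. now rewrite <- lamM, mVr, lam1. Qed.
Lemma lamLV x y z : lam (inv (lam x y)) z = lam (inv y) z.
Proof. rewrite <- (lamVl y (lam (inv (lam x y)) z)). rewrite <- (lamL x y (lam (inv (lam x y)) z)).
  rewrite lamVr. reflexivity. Qed.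

Ltac norm := repeat progress (rewrite ?assocR, ?m1l, ?m1r, ?mVl, ?mVr, ?cancL, ?cancL', ?invM, ?invI, ?inv1,
   ?lamD, ?lamI, ?lam_one, ?lamM, ?lamL, ?lamLV, ?lamVl, ?lamVr, ?lam1).

Ltac lc1 := match goal with
 | |- context [lam ?a (lam ?b (lam (inv ?a) ?w))] => rewrite (lamC b (inv a) w)
 | |- context [lam (inv ?a) (lam ?b (lam ?a ?w))] => rewrite (lamC b a w)
 | |- context [lam ?a (lam ?b (lam ?c (lam (inv ?a) ?w)))] => rewrite (lamC c (inv a) w)
 | |- context [lam (inv ?a) (lam ?b (lam ?c (lam ?a ?w)))] => rewrite (lamC c a w)
 | |- context [lam ?a (lam ?b (lam ?c (lam ?d (lam (inv ?a) ?w))))] => rewrite (lamC d (inv a) w)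
 | |- context [lam (inv ?a) (lam ?b (lam ?c (lam ?d (lam ?a ?w))))] => rewrite (lamC d a w)
 end.
Ltac nrm := norm; repeat (lc1; norm).

Definition R (p : T * T) : T * T := let (g, h) := p in
  (lam g h, lam (inv h) (inv (lam g h) * g * lam g h)).
Definition R' (p : T * T) : T * T := let (g, h) := p in
  (g * lam g h * inv g, lam (inv h) g).
Definition Rt (p : T * T) : T * T := let (g, h) := p in
  (lam (inv g) h, lam (inv g) (inv h) * g * h).
Definition Rt' (p : T * T) : T * T := let (g, h) := p in
  (g * h * lam h (inv g), lam h g).

Lemma R_braid t : r12 R (r23 R (r12 R t)) = r23 R (r12 R (r23 R t)).
Proof. destruct t as [[x y] z]. unfold r12, r23, R. f_equal; [f_equal|]; nrm.
all: reflexivity. Qed.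

Lemma Rt_braid t : r12 Rt (r23 Rt (r12 Rt t)) = r23 Rt (r12 Rt (r23 Rt t)).
Proof. destruct t as [[x y] z]. unfold r12, r23, Rt. f_equal; [f_equal|]; nrm.
all: try reflexivity. all: rewrite (lamC (inv y) (inv x) z); reflexivity. Qed.
Lemma RR' p : R (R' p) = p.
Proof. destruct p as [x y]. unfold R, R'. f_equal; nrm. all: try reflexivity. Qed.
Lemma R'R p : R' (R p) = p.
Proof. destruct p as [x y]. unfold R, R'. f_equal; nrm. all: try reflexivity. Qed.
Lemma RtRt' p : Rt (Rt' p) = p.
Proof. destruct p as [x y]. unfold Rt, Rt'. f_equal; nrm. all: try reflexivity. Qed.
Lemma Rt'Rt p : Rt' (Rt p) = p.
Proof. destruct p as [x y]. unfold Rt, Rt'. f_equal; nrm. all: try reflexivity. Qed.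

Ltac bij_tac f := exists f; split; intro; simpl; nrm; try reflexivity.

Lemma R_nd : non_degenerate R.
Proof. intro x. split.
- bij_tac (fun t => lam (inv x) t).
- bij_tac (fun t => lam t x * lam x t * inv (lam t x)).
  rewrite (lamC y (inv x) x). nrm. reflexivity.
Qed.
Lemma R'_nd : non_degenerate R'.
Proof. intro x. split.
- bij_tac (fun t => lam (inv x) (inv x * t * x)).
- bij_tac (fun t => lam x t).
  Qed.
Lemma Rt_nd : non_degenerate Rt.
Proof. intro x. split.
- bij_tac (fun t => lam x t).
- bij_tac (fun t => lam (inv t) x * t * inv x).
  Qed.
Lemma Rt'_nd : non_degenerate Rt'.
Proof. intro x. split.
- bij_tac (fun t => inv x * t * lam t x).
- bij_tac (fun t => lam (inv x) t).
  Qed.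

Lemma abs_all : is_nd_YBE_solution R /\ is_nd_YBE_solution R' /\
  is_nd_YBE_solution Rt /\ is_nd_YBE_solution Rt'.
Proof.
  destruct (ybe_pair R R' RR' R'R (inhabits one) R_braid) as [H1 H2].
  destruct (ybe_pair Rt Rt' RtRt' Rt'Rt (inhabits one) Rt_braid) as [H3 H4].
  split; [split; [exact H1 | exact R_nd]|].
  split; [split; [exact H2 | exact R'_nd]|].
  split; [split; [exact H3 | exact Rt_nd]|].
  split; [exact H4 | exact Rt'_nd].
Qed.
End Abs.
Unset Implicit Arguments.

Module C.
Section Conc.
Variable T : Type.
Variable mul : T -> T -> T.
Variable inv : T -> T.
Variable one : T.
Variables K A : T -> Prop.
Variable psi : T -> T.
Variable alpha : T -> T -> T.
Local Notation "x * y" := (mul x y).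
Hypothesis HG : is_group mul inv one.
Hypothesis HK : is_subgroup mul inv one K.
Hypothesis HKc : central mul K.
Hypothesis HAb : quotient_abelian mul inv K A.
Hypothesis HL : is_lifting_A mul inv K A psi.
Hypothesis HB : is_in_B mul one K alpha.

Lemma assoc x y z : x * (y * z) = (x * y) * z. Proof. apply HG. Qed.
Lemma m1l x : one * x = x. Proof. apply HG. Qed.
Lemma m1r x : x * one = x. Proof. apply HG. Qed.
Lemma mVl x : inv x * x = one. Proof. apply HG. Qed.
Lemma mVr x : x * inv x = one. Proof. apply HG. Qed.
Lemma assocR x y z : (x * y) * z = x * (y * z). Proof. now rewrite assoc. Qed.
Lemma cancL x y : x * (inv x * y) = y. Proof. now rewrite assoc, mVr, m1l. Qed.
Lemma cancL' x y : inv x * (x * y) = y. Proof. now rewrite assoc, mVl, m1l. Qed.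
Lemma inv_uniq x y : x * y = one -> inv x = y.
Proof. intro H. rewrite <- (m1r (inv x)), <- H, assoc, mVl, m1l. reflexivity. Qed.
Lemma invM x y : inv (x * y) = inv y * inv x.
Proof. apply inv_uniq. rewrite assocR, (assoc y), mVr, m1l, mVr. reflexivity. Qed.
Lemma invI x : inv (inv x) = x. Proof. apply inv_uniq. apply mVl. Qed.
Lemma inv1 : inv one = one. Proof. apply inv_uniq. apply m1l. Qed.

Ltac gnorm := repeat progress (rewrite ?assocR, ?m1l, ?m1r, ?mVl, ?mVr, ?cancL, ?cancL', ?invM, ?invI, ?inv1).

Lemma K1 : K one. Proof. apply HK. Qed.
Lemma KM x y : K x -> K y -> K (x * y). Proof. apply HK. Qed.
Lemma KV x : K x -> K (inv x). Proof. apply HK. Qed.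
Lemma Kc k x : K k -> k * x = x * k. Proof. intro H; apply HKc; exact H. Qed.
Lemma Kc' k x y : K k -> k * (x * y) = x * (k * y). Proof. intro H. rewrite assoc, (Kc k x), assocR; auto. Qed.

Lemma conjK p q y : K (inv p * q) -> p * y * inv p = q * y * inv q.
Proof. intro H. replace q with (p * (inv p * q)) by (now rewrite cancL).
  set (k := inv p * q) in *. rewrite invM. gnorm. rewrite (Kc' k y); auto. gnorm. reflexivity. Qed.

Definition c x y := psi x * y * inv (psi x).
Definition lam x y := c x y * alpha x y.

Lemma psi1 : K (psi one).
Proof. destruct HL as [_ [_ Hh]]. specialize (Hh one one). unfold same_coset in Hh.
  rewrite m1l, cancL' in Hh. exact Hh. Qed.
Lemma psiK k : K k -> K (psi k).
Proof. intro H. destruct HL as [_ [Hw _]]. assert (E: K (inv (psi k) * psi one)).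
  { apply Hw. unfold same_coset. rewrite m1r. apply KV; auto. }
  replace (psi k) with (psi one * inv (inv (psi k) * psi one)).
  - apply KM. apply psi1. apply KV; auto.
  - rewrite invM, invI. gnorm. reflexivity. Qed.
Lemma cK k z : K k -> c k z = z.
Proof. intro H. unfold c. rewrite (Kc (psi k) z) by (apply psiK; auto). gnorm. reflexivity. Qed.
Lemma c1 z : c one z = z. Proof. apply cK, K1. Qed.
Lemma cval k x : K k -> c x k = k.
Proof. intro H. unfold c. rewrite <- (Kc k (psi x)) by auto. gnorm. reflexivity. Qed.
Lemma cD x y z : c x (y * z) = c x y * c x z. Proof. unfold c. gnorm. reflexivity. Qed.
Lemma cMi x y z : c (x * y) z = c x (c y z).
Proof. unfold c. destruct HL as [_ [_ Hh]]. rewrite (conjK (psi (x*y)) (psi x * psi y)) by apply Hh.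
  rewrite invM. gnorm. reflexivity. Qed.
Lemma cC x y z : c x (c y z) = c y (c x z).
Proof. unfold c. destruct HL as [HA _].
  transitivity ((psi x * psi y) * z * inv (psi x * psi y)). { rewrite invM; gnorm; reflexivity. }
  rewrite (conjK (psi x * psi y) (psi y * psi x)) by (apply HAb; apply HA).
  rewrite invM; gnorm; reflexivity. Qed.
Lemma cL x y z : c (c x y) z = c y z.
Proof. change (c (psi x * y * inv (psi x)) z = c y z). rewrite !cMi. rewrite (cC y). rewrite <- cMi, mVr, c1. reflexivity. Qed.

Lemma aK x : K x -> forall g, alpha x g = one /\ alpha g x = one.
Proof. intros H g. apply HB; auto. Qed.
Lemma aL g h k : alpha (g * h) k = alpha g k * alpha h k. Proof. apply HB. Qed.
Lemma aR g h k : alpha g (h * k) = alpha g h * alpha g k. Proof. apply HB. Qed.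
Lemma aKv g h : K (alpha g h). Proof. apply HB. Qed.
Lemma aVl g h : alpha (inv g) h = inv (alpha g h).
Proof. symmetry; apply inv_uniq. rewrite <- aL, mVr. apply (proj1 (aK one K1 h)). Qed.
Lemma aVr g h : alpha g (inv h) = inv (alpha g h).
Proof. symmetry; apply inv_uniq. rewrite <- aR, mVr. apply (proj2 (aK one K1 g)). Qed.
Lemma aconjr x p y : alpha x (p * y * inv p) = alpha x y.
Proof. rewrite !aR, aVr. rewrite (Kc (alpha x p)) by apply aKv. gnorm. reflexivity. Qed.
Lemma aconjl x p y : alpha (p * y * inv p) x = alpha y x.
Proof. rewrite !aL, aVl. rewrite (Kc (alpha p x)) by apply aKv. gnorm. reflexivity. Qed.
Lemma acr x y z : alpha x (c y z) = alpha x z. Proof. apply aconjr. Qed.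
Lemma acl x y z : alpha (c y z) x = alpha z x. Proof. apply aconjl. Qed.
Lemma aKl k x : K k -> alpha k x = one. Proof. intro H; apply (proj1 (aK k H x)). Qed.
Lemma aKr k x : K k -> alpha x k = one. Proof. intro H; apply (proj2 (aK k H x)). Qed.

Lemma lamD x y z : lam x (y * z) = lam x y * lam x z.
Proof. unfold lam. rewrite cD, aR. gnorm. rewrite (Kc' (alpha x y)) by apply aKv. reflexivity. Qed.
Lemma lamM x y z : lam (x * y) z = lam x (lam y z).
Proof. unfold lam. rewrite cMi, cD, aL, aR, (cval (alpha y z) x) by apply aKv.
  rewrite (aKr (alpha y z) x) by apply aKv. rewrite acr. gnorm.
  rewrite (Kc (alpha x z)) by apply aKv. reflexivity. Qed.
Lemma lamC x y z : lam x (lam y z) = lam y (lam x z).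
Proof. rewrite <- !lamM. unfold lam. rewrite !cMi, cC, !aL. rewrite (Kc (alpha x z)) by apply aKv.
  reflexivity. Qed.
Lemma lamL x y z : lam (lam x y) z = lam y z.
Proof. unfold lam. rewrite cMi, cL, (cK (alpha x y)) by apply aKv.
  rewrite aL, (aKl (alpha x y)) by apply aKv. unfold c at 2. rewrite aconjl, m1r. reflexivity. Qed.
Lemma lam1 z : lam one z = z.
Proof. unfold lam. rewrite c1, aKl by apply K1. apply m1r. Qed.

Lemma c_inv h w : c (inv h) w = inv (psi h) * w * psi h.
Proof. transitivity (c (inv h) (c h (inv (psi h) * w * psi h))).
  { f_equal. unfold c. gnorm. reflexivity. } rewrite <- cMi, mVl, c1. reflexivity. Qed.
Lemma conjK2 u k g : K k -> inv (u * k) * g * (u * k) = inv u * g * u.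
Proof. intro H. rewrite invM. gnorm. rewrite (Kc' (inv k)) by (apply KV; auto).
  rewrite (Kc' (inv k)) by (apply KV; auto). rewrite (Kc' (inv k)) by (apply KV; auto).
  gnorm. reflexivity. Qed.
Lemma aconjr' x p y : alpha x (inv p * y * p) = alpha x y.
Proof. rewrite <- (invI p) at 2. apply aconjr. Qed.

Lemma r_eq g h : r_map mul inv psi alpha (g,h) = R mul inv lam (g,h).
Proof. unfold r_map, R, lam. f_equal. rewrite conjK2 by apply aKv. rewrite aconjr', c_inv.
  unfold c. gnorm. reflexivity. Qed.
Lemma r'_eq g h : r'_map mul inv psi alpha (g,h) = R' mul inv lam (g,h).
Proof. unfold r'_map, R', lam. f_equal.
  - unfold c. gnorm. rewrite (Kc (alpha g h) (inv g)) by apply aKv. reflexivity.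
  - rewrite c_inv. reflexivity. Qed.
Lemma rt_eq g h : rt_map mul inv psi alpha (g,h) = Rt mul inv lam (g,h).
Proof. unfold rt_map, Rt, lam. f_equal.
  - rewrite c_inv. reflexivity.
  - rewrite c_inv, aVl, aVr, invI. gnorm. rewrite (Kc' (alpha g h) g h) by apply aKv.
    rewrite (Kc (alpha g h) h) by apply aKv. reflexivity. Qed.
Lemma rt'_eq g h : rt'_map mul inv psi alpha (g,h) = Rt' mul inv lam (g,h).
Proof. unfold rt'_map, Rt', lam. unfold c. f_equal; gnorm; reflexivity. Qed.
End Conc.
End C.


Theorem mainTheorem15 (T : Type) (mul : T -> T -> T) (inv : T -> T) (one : T)
  (K A : T -> Prop) (psi_up : T -> T) (alpha : T -> T -> T) :
  is_group mul inv one ->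
  is_subgroup mul inv one K -> central mul K ->
  is_subgroup mul inv one A -> (forall x, K x -> A x) ->
  quotient_abelian mul inv K A ->
  is_lifting_A mul inv K A psi_up ->
  is_in_B mul one K alpha ->
  is_nd_YBE_solution (r_map mul inv psi_up alpha) /\
  is_nd_YBE_solution (r'_map mul inv psi_up alpha) /\
  is_nd_YBE_solution (rt_map mul inv psi_up alpha) /\
  is_nd_YBE_solution (rt'_map mul inv psi_up alpha).

Proof.
  intros HG HK HKc HA HKA HAb HL HB.
  assert (E1 : r_map mul inv psi_up alpha = R mul inv (C.lam T mul inv psi_up alpha))
    by (apply functional_extensionality; intros [g h]; exact (C.r_eq T mul inv one K A psi_up alpha HG HK HKc HL HB g h)).
  assert (E2 : r'_map mul inv psi_up alpha = R' mul inv (C.lam T mul inv psi_up alpha))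
    by (apply functional_extensionality; intros [g h]; exact (C.r'_eq T mul inv one K A psi_up alpha HG HK HKc HL HB g h)).
  assert (E3 : rt_map mul inv psi_up alpha = Rt mul inv (C.lam T mul inv psi_up alpha))
    by (apply functional_extensionality; intros [g h]; exact (C.rt_eq T mul inv one K A psi_up alpha HG HK HKc HL HB g h)).
  assert (E4 : rt'_map mul inv psi_up alpha = Rt' mul inv (C.lam T mul inv psi_up alpha))
    by (apply functional_extensionality; intros [g h]; exact (C.rt'_eq T mul inv one psi_up alpha HG g h)).
  rewrite E1, E2, E3, E4.
  pose proof HG as HG'. destruct HG' as [Ha [H1l [H1r [HVl HVr]]]].
  apply (abs_all mul inv Ha H1l H1r HVl HVr); intros.
  - exact (C.lamD T mul inv one K psi_up alpha HG HKc HB _ _ _).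
  - exact (C.lamM T mul inv one K A psi_up alpha HG HK HKc HL HB _ _ _).
  - exact (C.lamC T mul inv one K A psi_up alpha HG HK HKc HAb HL HB _ _ _).
  - exact (C.lamL T mul inv one K A psi_up alpha HG HK HKc HAb HL HB _ _ _).
  - exact (C.lam1 T mul inv one K A psi_up alpha HG HK HKc HL HB _).
Qed.
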